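(* Let $\dot\Sigma_0=\{\cap_{\mathrm{I}},\cap_{\mathrm{D}},\cdot_{\mathrm{D}},\smile\}\subseteq\dot\Sigma$, where $\cap_{\mathrm{I}}$, $\cap_{\mathrm{D}}$, $\cdot_{\mathrm{D}}$ denote the characters $(\_\cap\mathrm{I})$, $(\_\cap\mathrm{D})$, $(\_\cdot\mathrm{D})$ respectively. If $\dot\Sigma_0^*/{\dot\sim_{\mathrm{REL}_{\ge 5}}}$ is finite, then $\dot\Sigma^*/{\dot\sim_{\mathrm{REL}_{\ge 5}}}$ is finite.
   Context: Fix a non-empty finite set $V$ of variables. Consider terms over variables, binary $\cap$, binary $\cdot$, constants $\mathrm{I},\mathrm{D}$ and unary converse $\smile$, interpreted in a structure $M$ (a non-empty set $|M|$ with a binary relation $a^M\subseteq|M|^2$ for each $a\in V$) by $[\![a]\!]_M=a^M$, $\cap$ as intersection, $[\![\mathrm{I}]\!]_M=\{(x,y):x=y\}$, $[\![\mathrm{D}]\!]_M=\{(x,y):x\ne y\}$, $R\cdot S=\{(x,y):\exists z,(x,z)\in R\wedge(z,y)\in S\}$, $R^{\smile}=\{(x,y):(y,x)\in R\}$. $\mathrm{REL}_{\ge 5}$ is the class of structures with at least $5$ elements, and $t\sim_{\mathrm{REL}_{\ge5}}s$ iff $[\![t]\!]_M=[\![s]\!]_M$ for all $M\in\mathrm{REL}_{\ge5}$. $\dot\Sigma$ is the set of characters $(\_\cap t)$, $(t\cap\_)$, $(\_\cdot t)$, $(t\cdot\_)$ for all variable-free such terms $t$, together with the character $\smile$. For $w\in\dot\Sigma^*$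 and a term $t$, $w[t]$ is defined by $\varepsilon[t]=t$, $((\_\cap s)w')[t]=w'[t]\cap s$, $((s\cap\_)w')[t]=s\cap w'[t]$, $((\_\cdot s)w')[t]=w'[t]\cdot s$, $((s\cdot\_)w')[t]=s\cdot w'[t]$, $(\smile w')[t]=(w'[t])^{\smile}$. $w\ \dot\sim_{\mathrm{REL}_{\ge5}}\ w'$ iff $w[a]\sim_{\mathrm{REL}_{\ge 5}}w'[a]$ for any variable $a\in V$ (considered on $\dot\Sigma^*$ and on $\dot\Sigma_0^*$). *)

(* Defs.v *)
From Stdlib Require List.
From mathcomp Require Import all_boot.
Set Implicit Arguments. Unset Strict Implicit. Unset Printing Implicit Defensive.

Inductive term (X : Type) : Type :=
| tVar  : X -> term X
| tCap  : term X -> term X -> term X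
| tComp : term X -> term X -> term X
| tI    : term X
| tD    : term X
| tConv : term X -> term X.
Arguments tI {X}. Arguments tD {X}.

Definition cterm := term Empty_set.

Fixpoint cterm_embed (X : Type) (t : cterm) : term X :=
  match t with
  | tVar e => match e with end
  | tCap s u => tCap (cterm_embed X s) (cterm_embed X u)
  | tComp s u => tComp (cterm_embed X s) (cterm_embed X u)
  | tI => tI
  | tD => tD
  | tConv s => tConv (cterm_embed X s)
  end.

Fixpoint sem (X T : Type) (rel : X -> T -> T -> Prop) (t : term X) : T -> T -> Prop :=
  match t with
  | tVar a => rel a
  | tCap s u => fun x y => sem rel s x y /\ sem rel u x y
  | tComp s u => fun x y => exists z, sem rel s x z /\ sem rel u z y
  | tI => fun x y => x = y
  | tD => fun x y => x <> y
  | tConv s => fun x y => sem rel s y x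
  end.

Definition atleast5 (T : Type) : Prop :=
  exists f : nat -> T, forall i j, i < 5 -> j < 5 -> f i = f j -> i = j.

Definition equiv_REL5 (X : Type) (t s : term X) : Prop :=
  forall (T : Type) (rel : X -> T -> T -> Prop), atleast5 T ->
    forall x y, sem rel t x y <-> sem rel s x y.

Inductive dchar : Type :=
| cCapR  : cterm -> dchar
| cCapL  : cterm -> dchar
| cCompR : cterm -> dchar
| cCompL : cterm -> dchar
| cConv  : dchar.

Definition apply_char (X : Type) (c : dchar) (t : term X) : term X :=
  match c with
  | cCapR s => tCap t (cterm_embed X s)
  | cCapL s => tCap (cterm_embed X s) t
  | cCompR s => tComp t (cterm_embed X s)
  | cCompL s => tComp (cterm_embed X s) t
  | cConv => tConv t
  end.

Fixpoint plug (X : Type) (w : seq dchar) (t : term X) : term X :=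
  match w with
  | [::] => t
  | c :: w' => apply_char c (plug w' t)
  end.

Definition dequiv (V : Type) (w w' : seq dchar) : Prop :=
  forall a : V, equiv_REL5 (plug w (tVar a)) (plug w' (tVar a)).

Inductive dchar0 : Type := c0CapI | c0CapD | c0CompD | c0Conv.

Definition char0_embed (c : dchar0) : dchar :=
  match c with
  | c0CapI => cCapR tI
  | c0CapD => cCapR tD
  | c0CompD => cCompR tD
  | c0Conv => cConv
  end.

Definition word0_embed (w : seq dchar0) : seq dchar := map char0_embed w.

Definition finite_quotient (A : Type) (R : A -> A -> Prop) : Prop :=
  exists reps : seq A, forall w, exists2 r, List.In r reps & R w r.

(* Main.v *)
Require Import Defs.
From mathcomp Require Import all_boot.
From Stdlib Require Import Classical Setoid Morphisms.
From Stdlib Require List.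

Definition interp {T : Type} (p : bool * bool) (x y : T) : Prop :=
  match p with
  | (true, true) => True
  | (true, false) => x = y
  | (false, true) => x <> y
  | (false, false) => False
  end.

Fixpoint cls (t : cterm) : bool * bool :=
  match t with
  | tVar e => match e with end
  | tCap s u => ((cls s).1 && (cls u).1, (cls s).2 && (cls u).2)
  | tComp s u => let p := cls s in let q := cls u in
      (p.1 && q.1 || p.2 && q.2, p.1 && q.2 || p.2 && q.1 || p.2 && q.2)
  | tI => (true, false)
  | tD => (false, true)
  | tConv s => cls s
  end.

Lemma third {T : Type} : atleast5 T -> forall x y : T, exists z, z <> x /\ z <> y.
Proof.
move=> [f Hf] x y.
have H01 : f 0 <> f 1 by move=> e; have := Hf 0 1 isT isT e.
have H02 : f 0 <> f 2 by move=> e; have := Hf 0 2 isT isT e.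
have H12 : f 1 <> f 2 by move=> e; have := Hf 1 2 isT isT e.
destruct (classic (f 0 = x)); destruct (classic (f 0 = y));
destruct (classic (f 1 = x)); destruct (classic (f 1 = y));
destruct (classic (f 2 = x)); destruct (classic (f 2 = y));
subst; try congruence; eauto.
Qed.

Lemma csem (X T : Type) (rel : X -> T -> T -> Prop) : atleast5 T ->
  forall t x y, sem rel (cterm_embed X t) x y <-> interp (cls t) x y.
Proof.
move=> H5; elim=> [[]|s IHs u IHu|s IHs u IHu| | |s IHs] x y /=; try tauto.
- rewrite IHs IHu; case: (cls s) => [[] []]; case: (cls u) => [[] []] /=; tauto.
- split.
  + move=> [z [H1 H2]]; move: H1 H2; rewrite IHs IHu.
    case: (cls s) => [[] []]; case: (cls u) => [[] []] /=; try tauto;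
    move=> H1 H2; subst; auto; destruct (classic (x = y)); auto.
  + have Ex : forall P Q : T -> T -> Prop, (forall a b, sem rel (cterm_embed X s) a b <-> P a b) ->
       (forall a b, sem rel (cterm_embed X u) a b <-> Q a b) -> (exists z, P x z /\ Q z y) ->
       exists z, sem rel (cterm_embed X s) x z /\ sem rel (cterm_embed X u) z y.
      move=> P Q HP HQ [z [h1 h2]]; exists z; rewrite HP HQ; auto.
    move=> H; apply: (Ex _ _ IHs IHu); move: H.
    have [w [Hw1 Hw2]] := third H5 x y.
    destruct (classic (x = y)) as [E|E]; [subst y|];
    case: (cls s) => [[] []]; case: (cls u) => [[] []] /= H; try tauto;
    first [solve [exists x; simpl; auto] | solve [exists y; simpl; auto] | solve [exists w; simpl; auto]].
- move: (IHs y x); case: (cls s) => [[] []] /=; intuition.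
Qed.

Definition g (c : dchar) : seq dchar0 :=
  match c with
  | cCapR t | cCapL t => match cls t with
      | (false, false) => [:: c0CapI; c0CapD] | (true, false) => [:: c0CapI]
      | (false, true) => [:: c0CapD] | (true, true) => [::] end
  | cCompR t => match cls t with
      | (false, false) => [:: c0CapI; c0CapD] | (true, false) => [::]
      | (false, true) => [:: c0CompD] | (true, true) => [:: c0CompD; c0CompD] end
  | cCompL t => match cls t with
      | (false, false) => [:: c0CapI; c0CapD] | (true, false) => [::]
      | (false, true) => [:: c0Conv; c0CompD; c0Conv]
      | (true, true) => [:: c0Conv; c0CompD; c0CompD; c0Conv] end
  | cConv => [:: c0Conv]
  end.

Lemma gsem (X T : Type) (rel : X -> T -> T -> Prop) : atleast5 T ->
  forall c t x y, sem rel (apply_char c t) x y <-> sem rel (plug (word0_embed (g c)) t) x y.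
Proof.
move=> H5; case=> [t0|t0|t0|t0|] t x y //=;
move: (csem X T rel H5 t0); case: (cls t0) => [[] []] Ht /=; setoid_rewrite Ht => /=.
all: try solve [tauto | firstorder].
- split; [move=> [z [h _]] | move=> [z [[z0 [h _]] _]]; by exists z0].
  have [m [m1 m2]] := third H5 z y; exists m; split; auto.
  exists z; split; auto; move=> e; apply: m1; by rewrite e.
- split; [move=> [z [h e]]; by subst | by exists y].
- split; [move=> [z [_ h]] | move=> [z [[z0 [h _]] _]]; by exists z0].
  have [m [m1 m2]] := third H5 z x; exists m; split; auto.
  exists z; split; auto; move=> e; apply: m1; by rewrite e.
- split; [move=> [z [e h]]; by subst | by exists x].
Qed.

Lemma plug_cat (X : Type) (u v : seq dchar) (t : term X) :
  plug (u ++ v) t = plug u (plug v t).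
Proof. by elim: u => //= c u ->. Qed.

Lemma plug_cong (X T : Type) (rel : X -> T -> T -> Prop) (u : seq dchar) (t t' : term X) :
  (forall x y, sem rel t x y <-> sem rel t' x y) ->
  forall x y, sem rel (plug u t) x y <-> sem rel (plug u t') x y.
Proof.
move=> H; elim: u => //= c u IH; case: c => [s|s|s|s|] x y /=.
- by rewrite IH.
- by rewrite IH.
- by setoid_rewrite IH.
- by setoid_rewrite IH.
- by rewrite IH.
Qed.

Definition f (w : seq dchar) : seq dchar0 := flatten (map g w).

Lemma word0_embed_cat u v : word0_embed (u ++ v) = word0_embed u ++ word0_embed v.
Proof. exact: map_cat. Qed.

Lemma fsem (X T : Type) (rel : X -> T -> T -> Prop) : atleast5 T ->
  forall w t x y, sem rel (plug w t) x y <-> sem rel (plug (word0_embed (f w)) t) x y.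
Proof.
move=> H5; elim=> [//|c w IH] t x y.
rewrite /f /= -/(f w) word0_embed_cat plug_cat /=.
rewrite (gsem _ _ rel H5 c (plug w t)).
by apply: plug_cong => a b; apply: IH.
Qed.

Theorem lemma4p12 (V : finType) (HV : 0 < #|V|) :
  finite_quotient (fun w w' : seq dchar0 =>
                     dequiv V (word0_embed w) (word0_embed w')) ->
  finite_quotient (fun w w' : seq dchar => dequiv V w w').
Proof.
move=> [reps Hr]; exists (map word0_embed reps) => w.
have [r0 Hin Heq] := Hr (f w).
exists (word0_embed r0); first exact: List.in_map.
move=> a T rel H5 x y.
rewrite (fsem _ _ rel H5 w (tVar a)).
exact: Heq.
Qed.
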